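(* Let $V$ be a commutative unital quantale whose underlying lattice is a frame and in which $k=\top$. Let $(X,a)$, $(Y,b)$ be $V$-groups, $\varphi\colon Y\to\mathrm{Aut}(X)$ a group action, and $c$ a $V$-category structure on $X\rtimes_\varphi Y$ such that $(X,a)\xrightarrow{\langle 1,0\rangle}(X\rtimes_\varphi Y,c)\underset{\langle 0,1\rangle}{\overset{\pi_2}{\rightleftarrows}}(Y,b)$ is a split extension in $\mathsf{VGrp}$. Then $a\otimes b\le c\le\mathrm{lex}$ (pointwise), where $(a\otimes b)((x,y),(x',y'))=a(x,x')\otimes b(y,y')$ and $\mathrm{lex}((x,y),(x',y'))$ equals $a(x,x')$ if $y=y'$ and $b(y,y')$ if $y\neq y'$.
   Context: A commutative unital quantale $V$ is a complete lattice with a commutative associative operation $\otimes$ with unit $k$ preserving arbitrary joins in each variable. A $V$-category $(X,a)$: $a\colon X\times X\to V$ with $k\le a(x,x)$ and $a(x,x')\otimes a(x',x'')\le a(x,x'')$; a $V$-functor is a map $f$ with $a(x,x')\le b(f(x),f(x'))$. A $V$-group $(X,a,+)$ is a $V$-category with a group structure (additive, not necessarily abelian) such that $a(x_1,x_2)\otimes a(x_1',x_2')\le a(x_1+x_1',x_2+x_2')$; $V$-homomorphisms are group homomorphisms that are $V$-functors; category $\mathsf{VGrp}$ (pointed since $k=\top$). The semidirect product $X\rtimes_\varphi Y$ is $X\times Y$ with $(x,y)+(x',y')=(x+\varphi_y(x'),y+y')$, $\varphi_y=\varphi(y)$; $\langle 1,0\rangle(x)=(x,0)$, $\langle 0,1\rangle(y)=(0,y)$,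 $\pi_2(x,y)=y$. A split extension in $\mathsf{VGrp}$ means: the middle object is a $V$-group, all three maps are $V$-homomorphisms, $\pi_2\circ\langle 0,1\rangle=1_Y$, and $\langle 1,0\rangle$ is a kernel of $\pi_2$ in $\mathsf{VGrp}$ (so $a(x,x')=c((x,0),(x',0))$). *)

(* Defs.v *)
From Stdlib Require Import ClassicalEpsilon.

Set Implicit Arguments.

Record quantale := Quantale {
  qcar :> Type;
  qle : qcar -> qcar -> Prop;
  qsup : (qcar -> Prop) -> qcar;
  qtens : qcar -> qcar -> qcar;
  qk : qcar;
  qle_refl : forall u, qle u u;
  qle_trans : forall u v w, qle u v -> qle v w -> qle u w;
  qle_anti : forall u v, qle u v -> qle v u -> u = v;
  qsup_ub : forall (S : qcar -> Prop) u, S u -> qle u (qsup S);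
  qsup_least : forall (S : qcar -> Prop) w,
      (forall u, S u -> qle u w) -> qle (qsup S) w;
  qtens_comm : forall u v, qtens u v = qtens v u;
  qtens_assoc : forall u v w, qtens u (qtens v w) = qtens (qtens u v) w;
  qtens_unit : forall u, qtens qk u = u;
  qtens_supl : forall (S : qcar -> Prop) u,
      qtens (qsup S) u = qsup (fun z => exists s, S s /\ z = qtens s u);
  qtens_supr : forall (S : qcar -> Prop) u,
      qtens u (qsup S) = qsup (fun z => exists s, S s /\ z = qtens u s)
}.

Arguments qle {q} _ _.
Arguments qsup {q} _.
Arguments qtens {q} _ _.

Definition qtop (V : quantale) : V := @qsup V (fun _ : V => True).

Definition qmeet (V : quantale) (u v : V) : V :=
  qsup (fun w => qle w u /\ qle w v).

Arguments qmeet {V} _ _.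

Definition is_frame (V : quantale) : Prop :=
  forall (u : V) (S : V -> Prop),
    qmeet u (qsup S) = qsup (fun z => exists s, S s /\ z = qmeet u s).

Record grp_ops (X : Type) := GrpOps {
  gzero : X;
  gadd : X -> X -> X;
  gopp : X -> X
}.

Arguments gzero {X} _.
Arguments gadd {X} _ _ _.
Arguments gopp {X} _ _.

Definition is_group (X : Type) (G : grp_ops X) : Prop :=
  (forall x y z, gadd G x (gadd G y z) = gadd G (gadd G x y) z) /\
  (forall x, gadd G (gzero G) x = x) /\
  (forall x, gadd G x (gzero G) = x) /\
  (forall x, gadd G (gopp G x) x = gzero G) /\
  (forall x, gadd G x (gopp G x) = gzero G).

Definition is_group_hom (X Y : Type) (GX : grp_ops X) (GY : grp_ops Y)
  (f : X -> Y) : Prop :=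
  forall x x', f (gadd GX x x') = gadd GY (f x) (f x').

(* phi : Y -> Aut(X) is a group homomorphism (a group action by automorphisms) *)
Definition is_action (X Y : Type) (GX : grp_ops X) (GY : grp_ops Y)
  (phi : Y -> X -> X) : Prop :=
  (forall y, is_group_hom GX GX (phi y)) /\
  (forall y, exists psi : X -> X,
      (forall x, psi (phi y x) = x) /\ (forall x, phi y (psi x) = x)) /\
  (forall y y' x, phi (gadd GY y y') x = phi y (phi y' x)) /\
  (forall x, phi (gzero GY) x = x).

Definition is_Vcat (V : quantale) (X : Type) (a : X -> X -> V) : Prop :=
  (forall x, qle (qk V) (a x x)) /\
  (forall x x' x'', qle (qtens (a x x') (a x' x'')) (a x x'')).

Arguments is_Vcat {V X} _.

Definition is_Vfunctor (V : quantale) (X Y : Type) (a : X -> X -> V)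
  (b : Y -> Y -> V) (f : X -> Y) : Prop :=
  forall x x', qle (a x x') (b (f x) (f x')).

Arguments is_Vfunctor {V X Y} _ _ _.

Definition is_Vgroup (V : quantale) (X : Type) (G : grp_ops X)
  (a : X -> X -> V) : Prop :=
  is_Vcat a /\ is_group G /\
  (forall x1 x2 x1' x2',
      qle (qtens (a x1 x2) (a x1' x2')) (a (gadd G x1 x1') (gadd G x2 x2'))).

Arguments is_Vgroup {V X} _ _.

Definition is_Vhom (V : quantale) (X Y : Type) (GX : grp_ops X) (a : X -> X -> V)
  (GY : grp_ops Y) (b : Y -> Y -> V) (f : X -> Y) : Prop :=
  is_group_hom GX GY f /\ is_Vfunctor a b f.

Arguments is_Vhom {V X Y} _ _ _ _ _.

Definition sd_ops (X Y : Type) (GX : grp_ops X) (GY : grp_ops Y)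
  (phi : Y -> X -> X) : grp_ops (X * Y) :=
  GrpOps (gzero GX, gzero GY)
    (fun p q => (gadd GX (fst p) (phi (snd p) (fst q)), gadd GY (snd p) (snd q)))
    (fun p => (phi (gopp GY (snd p)) (gopp GX (fst p)), gopp GY (snd p))).

Definition inj1 (X Y : Type) (GY : grp_ops Y) (x : X) : X * Y := (x, gzero GY).
Definition inj2 (X Y : Type) (GX : grp_ops X) (y : Y) : X * Y := (gzero GX, y).
Definition pi2 (X Y : Type) (p : X * Y) : Y := snd p.

(** k : A -> B is a kernel of q : B -> C in VGrp (which is pointed, the zero
    morphisms being the constant-zero maps) *)
Definition is_kernel_VGrp (V : quantale) (A B C : Type)
  (GA : grp_ops A) (a : A -> A -> V) (GB : grp_ops B) (bb : B -> B -> V)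
  (GC : grp_ops C) (k : A -> B) (q : B -> C) : Prop :=
  is_Vhom GA a GB bb k /\
  (forall x, q (k x) = gzero GC) /\
  (forall (Z : Type) (GZ : grp_ops Z) (d : Z -> Z -> V),
      is_Vgroup GZ d ->
      forall f : Z -> B, is_Vhom GZ d GB bb f ->
      (forall z, q (f z) = gzero GC) ->
      exists! g : Z -> A, is_Vhom GZ d GA a g /\ (forall z, k (g z) = f z)).

Arguments is_kernel_VGrp {V A B C} _ _ _ _ _ _ _.

Definition is_split_ext (V : quantale) (X Y : Type) (GX : grp_ops X)
  (GY : grp_ops Y) (phi : Y -> X -> X) (a : X -> X -> V) (b : Y -> Y -> V)
  (c : X * Y -> X * Y -> V) : Prop :=
  let G := sd_ops GX GY phi in
  is_Vgroup G c /\
  is_Vhom GX a G c (@inj1 X Y GY) /\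
  is_Vhom G c GY b (@pi2 X Y) /\
  is_Vhom GY b G c (@inj2 X Y GX) /\
  (forall y : Y, pi2 (inj2 GX y) = y) /\
  is_kernel_VGrp GX a G c GY (@inj1 X Y GY) (@pi2 X Y).

Arguments is_split_ext {V X Y} _ _ _ _ _ _.

Definition lex (V : quantale) (X Y : Type) (a : X -> X -> V) (b : Y -> Y -> V)
  (p q : X * Y) : V :=
  if excluded_middle_informative (snd p = snd q) then a (fst p) (fst q)
  else b (snd p) (snd q).

Arguments lex {V X Y} _ _ _ _.

Definition tens_str (V : quantale) (X Y : Type) (a : X -> X -> V)
  (b : Y -> Y -> V) (p q : X * Y) : V :=
  qtens (a (fst p) (fst q)) (b (snd p) (snd q)).


Arguments tens_str {V X Y} _ _ _ _.

(* Main.v *)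
Require Import Defs.
From Stdlib Require Import ClassicalEpsilon.

Lemma qtens_monol (V : quantale) (u v w : V) :
  qle u v -> qle (qtens u w) (qtens v w).
Proof.
  intros H.
  assert (E : qsup (fun z => z = u \/ z = v) = v).
  { apply qle_anti.
    - apply qsup_least. intros z [->| ->]; [exact H | apply qle_refl].
    - apply qsup_ub. now right. }
  rewrite <- E, qtens_supl. apply qsup_ub. exists u. split; auto.
Qed.

Lemma qtens_mono (V : quantale) (u v u' v' : V) :
  qle u v -> qle u' v' -> qle (qtens u u') (qtens v v').
Proof.
  intros H1 H2. eapply qle_trans. apply qtens_monol, H1.
  rewrite (qtens_comm _ v u'), (qtens_comm _ v v'). apply qtens_monol, H2.
Qed.

Theorem proposition7p6 (V : quantale) (hframe : is_frame V)
  (hk : qk V = qtop V)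
  (X Y : Type) (GX : grp_ops X) (GY : grp_ops Y)
  (a : X -> X -> V) (b : Y -> Y -> V)
  (ha : is_Vgroup GX a) (hb : is_Vgroup GY b)
  (phi : Y -> X -> X) (hphi : is_action GX GY phi)
  (c : X * Y -> X * Y -> V)
  (hsplit : is_split_ext GX GY phi a b c) :
  forall p q : X * Y,
    qle (tens_str a b p q) (c p q) /\ qle (c p q) (lex a b p q).
Proof.
  destruct ha as [[ha1 ha2] [[gXa [gX0l [gX0r [gXNl gXNr]]]] ha3]].
  destruct hb as [[hb1 hb2] [[gYa [gY0l [gY0r [gYNl gYNr]]]] hb3]].
  destruct hphi as [phom [_ [_ phi0]]].
  destruct hsplit as [[[hc1 hc2] [_ hc3]] [[_ hi1] [[_ hp2] [[_ hi2] [_ hker]]]]].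
  destruct hker as [_ [_ hker]].
  unfold is_Vfunctor, inj1, inj2, pi2 in *. simpl in hc3.
  assert (phiz : forall y, phi y (gzero GX) = gzero GX).
  { intros y. set (u := phi y (gzero GX)).
    assert (Hu : u = gadd GX u u).
    { unfold u. rewrite <- phom. now rewrite gX0l. }
    transitivity (gadd GX (gopp GX u) (gadd GX u u)).
    - now rewrite gXa, gXNl, gX0l.
    - now rewrite <- Hu, gXNl. }
  assert (kerle : forall x x', qle (c (x, gzero GY) (x', gzero GY)) (a x x')).
  { set (d := fun x x' => c (x, gzero GY) (x', gzero GY)).
    assert (Hd : is_Vgroup GX d).
    { split; [split|split].
      - intros x. apply hc1.
      - intros x x' x''. apply hc2.
      - repeat split; assumption.
      - intros x1 x2 x1' x2'. unfold d.
        specialize (hc3 (x1, gzero GY) (x2, gzero GY) (x1', gzero GY) (x2', gzero GY)).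
        simpl in hc3. rewrite !phi0, gY0l in hc3. exact hc3. }
    assert (Hf : is_Vhom GX d (sd_ops GX GY phi) c (fun x => (x, gzero GY))).
    { split.
      + intros x x'. simpl. now rewrite phi0, gY0l.
      + intros x x'. apply qle_refl. }
    destruct (hker X GX d Hd (fun x => (x, gzero GY)) Hf (fun z => eq_refl))
      as [g [[[_ Hg] Hg2] _]].
    intros x x'.
      specialize (Hg x x').
      assert (E1 := Hg2 x). assert (E2 := Hg2 x').
      injection E1 as E1. injection E2 as E2. rewrite E1, E2 in Hg. exact Hg. }
  intros [x y] [x' y']. split.
  - unfold tens_str. simpl.
    eapply qle_trans.
    + apply qtens_mono. apply hi1. apply hi2.
    + specialize (hc3 (x, gzero GY) (x', gzero GY) (gzero GX, y) (gzero GX, y')).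
      simpl in hc3. rewrite !phi0, !gX0r, !gY0l in hc3. exact hc3.
  - unfold lex. simpl.
    destruct (excluded_middle_informative (y = y')) as [<-|n].
    + eapply qle_trans; [|apply kerle].
      eapply qle_trans.
      * rewrite <- (qtens_unit _ (c (x, y) (x', y))), qtens_comm.
        apply qtens_mono. apply qle_refl. apply (hc1 (gzero GX, gopp GY y)).
      * specialize (hc3 (x, y) (x', y) (gzero GX, gopp GY y) (gzero GX, gopp GY y)).
        simpl in hc3. rewrite !phiz, !gX0r, gYNr in hc3. exact hc3.
    + apply (hp2 (x, y) (x', y')).
Qed.
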